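(* Let $\varphi\colon G\to G$ be an endomorphism of an abelian group $G$ and let $n\in\mathbb N$, $n\neq 0$. Then $\varphi$ is positively expansive if and only if $\varphi^n$ is positively expansive. Analogously, if $\varphi$ is an automorphism, then $\varphi$ is expansive if and only if $\varphi^n$ is expansive.
   Context: $\mathbb N=\{0,1,2,\dots\}$. An endomorphism $\varphi$ of an abelian group $G$ is positively expansive if there is a finite subgroup $S\leq G$ such that for every finite subgroup $F\leq G$ there is $m\in\mathbb N$ with $F\subseteq\sum_{k=0}^m\varphi^kS$. An automorphism $\varphi$ is expansive if there is a finite subgroup $S\leq G$ such that for every finite subgroup $F\leq G$ there is $m\in\mathbb N$ with $F\subseteq\sum_{|k|\leq m}\varphi^kS$. *)

(* Defs.v *)
From mathcomp Require Import all_boot all_order all_algebra.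
Set Implicit Arguments. Unset Strict Implicit. Unset Printing Implicit Defensive.
Import GRing.Theory.
Local Open Scope ring_scope.

Definition is_subgroup (G : zmodType) (S : G -> Prop) : Prop :=
  S 0 /\ forall x y, S x -> S y -> S (x - y).

Definition finite_subset (G : zmodType) (S : G -> Prop) : Prop :=
  exists s : seq G, forall x, S x -> x \in s.

Definition fin_subgroup (G : zmodType) (S : G -> Prop) : Prop :=
  is_subgroup S /\ finite_subset S.

Definition pos_orbit_sum (G : zmodType) (phi : G -> G) (S : G -> Prop)
    (m : nat) (x : G) : Prop :=
  exists f : nat -> G, (forall k, S (f k)) /\
    x = \sum_(k < m.+1) iter k phi (f k).

Definition pos_expansive (G : zmodType) (phi : G -> G) : Prop :=
  exists S : G -> Prop, fin_subgroup S /\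
    forall F : G -> Prop, fin_subgroup F ->
      exists m : nat, forall x, F x -> pos_orbit_sum phi S m x.

Definition zpow (G : zmodType) (phi psi : G -> G) (k : int) : G -> G :=
  match k with
  | Posz n => iter n phi
  | Negz n => iter n.+1 psi
  end.

(* x \in \sum_{|k| <= m} phi^k S ; the index i < 2m+1 stands for k = i - m *)
Definition orbit_sum (G : zmodType) (phi psi : G -> G) (S : G -> Prop)
    (m : nat) (x : G) : Prop :=
  exists f : nat -> G, (forall k, S (f k)) /\
    x = \sum_(i < (m.*2).+1) zpow phi psi (i%:Z - m%:Z) (f i).

(* expansive automorphism phi, whose inverse is psi *)
Definition expansive (G : zmodType) (phi psi : G -> G) : Prop :=
  exists S : G -> Prop, fin_subgroup S /\
    forall F : G -> Prop, fin_subgroup F ->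
      exists m : nat, forall x, F x -> orbit_sum phi psi S m x.

(* Main.v *)
Require Import Defs.
From mathcomp Require Import all_boot all_order all_algebra.
From mathcomp Require Import zify.
Set Implicit Arguments. Unset Strict Implicit. Unset Printing Implicit Defensive.
Import GRing.Theory Num.Theory.
Local Open Scope ring_scope.

Section Gen.
Variable G : zmodType.

Definition addfun (f : G -> G) := forall a b, f (a - b) = f a - f b.

Lemma addf0 f : addfun f -> f 0 = 0.
Proof. by move=> h; have := h 0 0; rewrite !subrr. Qed.

Lemma addfN f a : addfun f -> f (- a) = - f a.
Proof. by move=> h; rewrite -sub0r h addf0 // sub0r. Qed.

Lemma addfD f a b : addfun f -> f (a + b) = f a + f b.
Proof. by move=> h; have := h a (- b); rewrite opprK (addfN b h) opprK. Qed.

Lemma addf_sum (I : Type) f (r : seq I) (F : I -> G) : addfun f ->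
  f (\sum_(i <- r) F i) = \sum_(i <- r) f (F i).
Proof.
move=> h; elim: r => [|a r IH]; first by rewrite !big_nil addf0.
by rewrite !big_cons addfD // IH.
Qed.

Lemma addf_iter f k : addfun f -> addfun (iter k f).
Proof. move=> h; elim: k => [|k IH] a b //=; by rewrite IH h. Qed.

Definition rep (I : Type) (T : I -> G -> G) (S : G -> Prop) (r : seq I) (x : G) :=
  exists f : I -> G, (forall k, S (f k)) /\ x = \sum_(j <- r) T j (f j).

Lemma rep_ext (I : Type) (T T' : I -> G -> G) S r x :
  (forall j y, T j y = T' j y) -> rep T S r x -> rep T' S r x.
Proof.
move=> e [f [Sf ->]]; exists f; split=> //; apply: eq_bigr => j _; exact: e.
Qed.

Lemma rep_sub (I : eqType) (T : I -> G -> G) S (r1 r2 : seq I) x :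
  S 0 -> (forall j, T j 0 = 0) -> uniq r1 -> uniq r2 -> {subset r1 <= r2} ->
  rep T S r1 x -> rep T S r2 x.
Proof.
move=> S0 T0 u1 u2 sub [f [Sf ->]].
exists (fun j => if j \in r1 then f j else 0); split.
  by move=> k; case: ifP => _; [apply: Sf|].
rewrite [RHS](eq_bigr (fun j => if j \in r1 then T j (f j) else 0)); last first.
  by move=> j _; case: ifP => // _; apply: T0.
rewrite -big_mkcond -big_filter; apply: perm_big.
apply: uniq_perm => //; first exact: filter_uniq.
move=> j; rewrite mem_filter; apply/idP/andP; first by move=> h; split=> //; exact: sub.
by case.
Qed.

Lemma rep_map (I J : Type) (T : I -> G -> G) S (h : J -> I) (g : I -> J) (r : seq J) x :
  cancel h g -> rep (fun k => T (h k)) S r x -> rep T S (map h r) x.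
Proof.
move=> hg [f [Sf ->]]; exists (fun j => f (g j)); split=> //.
by rewrite big_map; apply: eq_bigr => k _; rewrite hg.
Qed.

Lemma rep_chunk (I : Type) (T : I -> G -> G) S (r : seq I) (idx : seq nat)
   (c : I -> nat -> I) (U : I -> G -> G) (V : nat -> G -> G) x :
  (forall k i y, T (c k i) y = U k (V i y)) -> (forall k, addfun (U k)) ->
  rep T S [seq c k i | k <- r, i <- idx] x -> rep U (rep V S idx) r x.
Proof.
move=> e aU [f [Sf ->]].
exists (fun k => \sum_(i <- idx) V i (f (c k i))); split.
  by move=> k; exists (fun i => f (c k i)).
rewrite big_allpairs_dep; apply: eq_bigr => k _.
by rewrite addf_sum //; apply: eq_bigr => i _; rewrite e.
Qed.

Fixpoint enum_rep (I : Type) (T : I -> G -> G) (s : seq G) (r : seq I) : seq G :=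
  if r is j :: r' then [seq T j a + y | a <- s, y <- enum_rep T s r'] else [:: 0].

Lemma rep_fin_subgroup (I : Type) (T : I -> G -> G) S r :
  (forall j, addfun (T j)) -> fin_subgroup S -> fin_subgroup (rep T S r).
Proof.
move=> aT [[S0 SB] [s Ss]]; split; first split.
- exists (fun _ => 0); split=> //; rewrite big1 // => j _; exact: addf0.
- move=> x y [f [Sf ->]] [g [Sg ->]]; exists (fun k => f k - g k); split.
    by move=> k; apply: SB.
  rewrite -sumrB; apply: eq_bigr => j _; by rewrite aT.
- exists (enum_rep T s r) => x [f [Sf ->]].
  elim: r {x} => [|j r IH] /=; first by rewrite big_nil mem_seq1.
  rewrite big_cons; apply: (allpairs_f (fun a y => T j a + y)) => //; exact: Ss.
Qed.

End Gen.

Section Main.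
Variable G : zmodType.

Lemma P1 (phi : G -> G) S m x :
  pos_orbit_sum phi S m x <-> rep (fun j => iter j phi) S (iota 0 m.+1) x.
Proof.
have e : forall F : nat -> G, \sum_(k < m.+1) F k = \sum_(k <- iota 0 m.+1) F k.
  by move=> F; rewrite -(big_mkord xpredT) /index_iota subn0.
by split=> [[f [Sf ->]]|[f [Sf ->]]]; exists f; split=> //; rewrite (e (fun k => iter k phi (f k))).
Qed.

Definition window (m : nat) := [seq i%:Z - m%:Z | i <- iota 0 (m.*2).+1].

Lemma mem_window m j : (j \in window m) = (- m%:Z <= j <= m%:Z).
Proof.
apply/mapP/idP.
  by move=> [i]; rewrite mem_iota => /andP[_ h] ->; lia.
move=> h; exists (absz (j + m%:Z)); first by rewrite mem_iota; lia.
lia.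
Qed.

Lemma uniq_window m : uniq (window m).
Proof.
rewrite map_inj_uniq ?iota_uniq // => a b h; lia.
Qed.

Lemma Z1 (phi psi : G -> G) S m x :
  orbit_sum phi psi S m x <-> rep (zpow phi psi) S (window m) x.
Proof.
have e : forall F : nat -> G, \sum_(k < (m.*2).+1) F k = \sum_(k <- iota 0 (m.*2).+1) F k.
  by move=> F; rewrite -(big_mkord xpredT) /index_iota subn0.
split=> [[f [Sf ->]]|[f [Sf ->]]].
  rewrite /window; apply: (rep_map (h := fun i : nat => i%:Z - m%:Z) (g := fun k => absz (k + m%:Z))).
    by move=> i; rewrite subrK.
  by exists f; split=> //; rewrite (e (fun i => zpow phi psi (i%:Z - m%:Z) (f i))).
exists (fun i : nat => f (i%:Z - m%:Z)); split=> //.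
by rewrite (e (fun i => zpow phi psi (i%:Z - m%:Z) (f (i%:Z - m%:Z)))) /window big_map.
Qed.

Variables (phi psi : G -> G).
Hypotheses (aphi : addfun phi) (K1 : cancel phi psi) (K2 : cancel psi phi).

Lemma apsi : addfun psi.
Proof. by move=> a b; apply: (can_inj K1); rewrite K2 aphi !K2. Qed.

Lemma azpow k : addfun (zpow phi psi k).
Proof. case: k => n /=; apply: addf_iter; [exact: aphi | exact: apsi]. Qed.

Lemma zpowS k y : zpow phi psi (k + 1) y = zpow phi psi k (phi y).
Proof.
case: k => [a|[|a]].
- have -> : Posz a + 1 = Posz a.+1 by lia.
  by change (iter a.+1 phi y = iter a phi (phi y)); exact: iterSr.
- have -> : Negz 0 + 1 = 0 by [].
  by change (y = psi (phi y)); rewrite K1.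
- have -> : Negz a.+1 + 1 = Negz a by rewrite !NegzE; lia.
  by change (iter a.+1 psi y = iter a.+2 psi (phi y)); rewrite (iterSr a.+1) K1.
Qed.

Lemma zpowD k (i : nat) y : zpow phi psi (k + i%:Z) y = zpow phi psi k (iter i phi y).
Proof.
elim: i k y => [|i IH] k y; first by rewrite addr0.
have -> : k + i.+1%:Z = (k + i%:Z) + 1 by lia.
by rewrite zpowS IH iterSr.
Qed.

Lemma zpow_iter (n : nat) k y : (0 < n)%N ->
  zpow (iter n phi) (iter n psi) k y = zpow phi psi (k * n%:Z) y.
Proof.
move=> n0; case: k => a.
  have -> : Posz a * n%:Z = Posz (a * n) by lia.
  by change (iter a (iter n phi) y = iter (a * n) phi y); rewrite iterM.
have -> : Negz a * n%:Z = Negz (a.+1 * n).-1 by rewrite !NegzE prednK ?muln_gt0 //; lia.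
change (iter a.+1 (iter n psi) y = iter (a.+1 * n).-1.+1 psi y).
by rewrite prednK ?muln_gt0 // iterM.
Qed.

End Main.

Section Fin.
Variable G : zmodType.

Lemma pos_dir1 (phi : G -> G) (aphi : addfun phi) n : (0 < n)%N ->
  pos_expansive phi -> pos_expansive (iter n phi).
Proof.
move=> n0 [S [fS HS]].
exists (rep (fun j => iter j phi) S (iota 0 n)); split.
  by apply: rep_fin_subgroup => // j; apply: addf_iter.
move=> F /HS [m Hm]; exists m => x /Hm /P1 hx; apply/P1.
have S0 : S 0 by case: fS => [[]].
pose c := fun k i : nat => (k * n + i)%N.
have : rep (fun j => iter j phi) S [seq c k i | k <- iota 0 m.+1, i <- iota 0 n] x.
  apply: rep_sub hx => //.
  - move=> j; exact: addf0 (addf_iter j aphi).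
  - exact: iota_uniq.
  - apply: allpairs_uniq; try exact: iota_uniq.
    move=> [a b] [a' b'] h1 h2 /= e.
    have /allpairsP [[a1 b1] /= [_ hb [ea eb]]] := h1.
    have /allpairsP [[a2 b2] /= [_ hb' [ea' eb']]] := h2.
    subst; rewrite mem_iota in hb; rewrite mem_iota in hb'; move: e; rewrite /c => e.
    have eb : b1 = b2.
      by have := congr1 (modn^~ n) e; rewrite /= !modnMDl !modn_small.
    subst b2; have := congr1 (divn^~ n) e.
    by rewrite /= !divnMDl // !divn_small // !addn0 => ->.
  - move=> j; rewrite mem_iota => /andP [_ hj].
    rewrite (divn_eq j n); apply: (allpairs_f c); rewrite mem_iota /=.
      exact: leq_ltn_trans (leq_div j n) hj.
    exact: ltn_pmod.
move=> h; apply: (rep_ext _ (rep_chunk (U := fun k => iter (k * n) phi) (V := fun i => iter i phi) _ _ h)).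
- by move=> j y /=; rewrite iterM.
- by move=> k i y /=; rewrite /c iterD.
- by move=> k; apply: addf_iter.
Qed.

Lemma pos_dir2 (phi : G -> G) (aphi : addfun phi) n : (0 < n)%N ->
  pos_expansive (iter n phi) -> pos_expansive phi.
Proof.
move=> n0 [S [fS HS]]; exists S; split=> //.
move=> F /HS [m Hm]; exists (m * n)%N => x /Hm /P1 hx; apply/P1.
have S0 : S 0 by case: fS => [[]].
have h1 : rep (fun k => iter (k * n) phi) S (iota 0 m.+1) x.
  by apply: rep_ext hx => j y; rewrite iterM.
have h2 := rep_map (T := fun j => iter j phi) (h := fun k => (k * n)%N)
   (g := fun j => (j %/ n)%N) (fun k => mulnK k n0) h1.
apply: rep_sub h2 => //.
- move=> j; exact: addf0 (addf_iter j aphi).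
- by rewrite map_inj_uniq ?iota_uniq // => a b /eqP; rewrite eqn_pmul2r // => /eqP.
- exact: iota_uniq.
- move=> j /mapP [k]; rewrite !mem_iota => /andP[_ hk] ->; apply/andP; split=> //; nia.
Qed.

Lemma exp_dir1 (phi psi : G -> G) (aphi : addfun phi) (K1 : cancel phi psi) (K2 : cancel psi phi) n :
  (0 < n)%N -> expansive phi psi -> expansive (iter n phi) (iter n psi).
Proof.
move=> n0 [S [fS HS]].
exists (rep (fun j => iter j phi) S (iota 0 n)); split.
  by apply: rep_fin_subgroup => // j; apply: addf_iter.
move=> F /HS [m Hm]; exists m => x /Hm /Z1 hx; apply/Z1.
have S0 : S 0 by case: fS => [[]].
pose c := fun (k : int) (i : nat) => k * n%:Z + i%:Z.
have : rep (zpow phi psi) S [seq c k i | k <- window m, i <- iota 0 n] x.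
  apply: rep_sub hx => //.
  - move=> j; exact: addf0 (azpow aphi K1 K2 j).
  - exact: uniq_window.
  - apply: allpairs_uniq; [exact: uniq_window | exact: iota_uniq |].
    move=> [a b] [a' b'] h1 h2 /= e.
    have /allpairsP [[a1 b1] /= [_ hb [ea eb]]] := h1.
    have /allpairsP [[a2 b2] /= [_ hb' [ea' eb']]] := h2.
    subst; rewrite mem_iota in hb; rewrite mem_iota in hb'; move: e; rewrite /c => e.
    have ea2 : a1 = a2 by nia.
    by subst a2; have -> : b1 = b2 by lia.
  - move=> j; rewrite mem_window => hj.
    have nz : n%:Z != 0 by lia.
    have np : 0 < n%:Z by lia.
    have := divz_eq j n%:Z; have := modz_ge0 j nz; have := ltz_pmod j np.
    move: (j %/ n%:Z)%Z (j %% n%:Z)%Z => q r r1 r0 ej.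
    have -> : j = c q `|r|%N by rewrite /c; lia.
    apply: (allpairs_f c); rewrite ?mem_window ?mem_iota /=; nia.
move=> h; apply: (rep_ext _ (rep_chunk (U := fun k => zpow phi psi (k * n%:Z))
   (V := fun i => iter i phi) _ _ h)).
- by move=> k y; rewrite zpow_iter.
- by move=> k i y; rewrite /c zpowD.
- by move=> k; apply: azpow.
Qed.

Lemma exp_dir2 (phi psi : G -> G) (aphi : addfun phi) (K1 : cancel phi psi) (K2 : cancel psi phi) n :
  (0 < n)%N -> expansive (iter n phi) (iter n psi) -> expansive phi psi.
Proof.
move=> n0 [S [fS HS]]; exists S; split=> //.
move=> F /HS [m Hm]; exists (m * n)%N => x /Hm /Z1 hx; apply/Z1.
have S0 : S 0 by case: fS => [[]].
have nz : n%:Z != 0 by lia.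
have h1 : rep (fun k => zpow phi psi (k * n%:Z)) S (window m) x.
  by apply: rep_ext hx => k y; rewrite zpow_iter.
have h2 := rep_map (T := zpow phi psi) (h := fun k => k * n%:Z)
   (g := fun j => (j %/ n%:Z)%Z) (fun k => mulzK k nz) h1.
apply: rep_sub h2 => //.
- move=> j; exact: addf0 (azpow aphi K1 K2 j).
- rewrite map_inj_uniq ?uniq_window //; exact: mulIf.
- exact: uniq_window.
- move=> j /mapP [k]; rewrite mem_window => hk ->; rewrite mem_window; nia.
Qed.

End Fin.

Theorem proposition2p10 (G : zmodType) (phi : {additive G -> G}) (n : nat) :
  (0 < n)%N ->
  (pos_expansive phi <-> pos_expansive (iter n phi)) /\
  (forall psi : G -> G, cancel phi psi -> cancel psi phi ->
     (expansive phi psi <-> expansive (iter n phi) (iter n psi))).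
Proof.
move=> n0; have aphi : addfun phi by move=> a b; exact: raddfB.
split; first by split; [exact: pos_dir1 | exact: pos_dir2].
move=> psi K1 K2; split; [exact: exp_dir1 | exact: exp_dir2].
Qed.
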